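(* Fix $c \in \mathbb{R}$. For any $\vartheta \in \mathbb{R}$ and any $\alpha \in (0, 0.5)$ there exists $\delta > 0$ such that whenever $c < x^{\text{obs}} < c + \delta$, we have $\vartheta \notin [\theta(1-\alpha/2), \theta(\alpha/2)]$, where $\theta(\cdot)$ is computed at this $x^{\text{obs}}$.
   Context: Let $\Phi$ denote the standard normal distribution function. For $c \in \mathbb{R}$, $a \ge c$ and $\theta \in \mathbb{R}$ define $$F(a;\theta,c) = \frac{\Phi(a-\theta) - \Phi(c-\theta)}{1-\Phi(c-\theta)}.$$ It is known that for each fixed $x^{\text{obs}} > c$ the map $\theta \mapsto F(x^{\text{obs}};\theta,c)$ is continuous and strictly decreasing from $\mathbb{R}$ onto $(0,1)$. For $p \in (0,1)$ and $x^{\text{obs}} > c$, $\theta(p) = \theta(p; x^{\text{obs}}, c)$ denotes the unique $\theta$ with $F(x^{\text{obs}};\theta,c) = p$; it is strictly decreasing in $p$. The interval $[\theta(1-\alpha/2), \theta(\alpha/2)]$ is the $100(1-\alpha)\%$ conditional confidence interval. *)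

(* Defs.v *)
From Stdlib Require Import Reals.
From Coquelicot Require Import Coquelicot.
Open Scope R_scope.

Definition std_normal_pdf (t : R) : R := exp (- (t ^ 2) / 2) / sqrt (2 * PI).

Definition Phi (x : R) : R :=
  RInt_gen std_normal_pdf (Rbar_locally m_infty) (at_point x).

Definition F (a theta c : R) : R :=
  (Phi (a - theta) - Phi (c - theta)) / (1 - Phi (c - theta)).

(* theta(p; xobs, c) is characterised as the (unique) solution t of F(xobs; t, c) = p *)
Definition is_theta (p xobs c t : R) : Prop := F xobs t c = p.

(* Main.v *)
Require Import Defs.
From Stdlib Require Import Reals Lra Psatz.
From Coquelicot Require Import Coquelicot.
Open Scope R_scope.

Definition ge (s : R) : R := exp (- (s ^ 2) / 2).
Definition E (x : R) : R := RInt ge 0 x.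
Definition hf (x t : R) : R := exp (- (x ^ 2 * (1 + t ^ 2)) / 2) / (1 + t ^ 2).
Definition H (x : R) : R := RInt (hf x) 0 1.

Lemma one_t2 t : 1 + t ^ 2 <> 0.
Proof. nra. Qed.

Lemma ge_cont x : continuous ge x.
Proof. apply (ex_derive_continuous (K:=R_AbsRing) (V:=R_NormedModule)). unfold ge. auto_derive. auto. Qed.

Lemma ge_ex a b : ex_RInt ge a b.
Proof. apply (ex_RInt_continuous (V:=R_CompleteNormedModule)). intros; apply ge_cont. Qed.

Lemma E_deriv x : is_derive E x (ge x).
Proof.
  apply is_derive_RInt with 0.
  - apply filter_forall. intros b. unfold E. apply (RInt_correct (V:=R_CompleteNormedModule)), ge_ex.
  - apply ge_cont.
Qed.

Lemma hf_cont x t : continuous (hf x) t.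
Proof. apply (ex_derive_continuous (K:=R_AbsRing) (V:=R_NormedModule)). unfold hf. auto_derive. apply one_t2. Qed.

Lemma hf_deriv x t : is_derive (fun u => hf u t) x (- (x * exp (- (x ^ 2 * (1 + t ^ 2)) / 2))).
Proof.
  unfold hf. auto_derive.
  - exact I.
  - replace (- (x * (x * 1) * (1 + t * (t * 1))) * / 2) with (- (x ^ 2 * (1 + t ^ 2)) / 2) by (simpl; field).
    field. nra.
Qed.

Lemma d_cont x t : continuity_2d_pt (fun u v => - (u * exp (- (u ^ 2 * (1 + v ^ 2)) / 2))) x t.
Proof.
  apply continuity_2d_pt_opp. apply continuity_2d_pt_mult. apply continuity_2d_pt_id1.
  apply continuity_1d_2d_pt_comp with (f := exp).
  - apply derivable_continuous_pt. apply derivable_pt_exp.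
  - apply continuity_2d_pt_ext with (f := fun u v => (- ((u * u) * (1 + v * v))) * / 2).
    + intros; simpl; unfold Rdiv; ring.
    + apply continuity_2d_pt_mult; [|apply continuity_2d_pt_const].
      apply continuity_2d_pt_opp. apply continuity_2d_pt_mult.
      * apply continuity_2d_pt_mult; apply continuity_2d_pt_id1.
      * apply continuity_2d_pt_plus. apply continuity_2d_pt_const.
        apply continuity_2d_pt_mult; apply continuity_2d_pt_id2.
Qed.

Lemma H_deriv (x : R) : is_derive H x (- (ge x * E x)).
Proof.
  assert (Hd : is_derive H x (RInt (fun t => Derive (fun u => hf u t) x) 0 1)).
  { unfold H. apply (is_derive_RInt_param hf 0 1 x).
    - apply filter_forall. intros y t _. eexists. apply hf_deriv.
    - intros t _. eapply continuity_2d_pt_ext; [|apply (d_cont x t)].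
      intros u v. simpl. symmetry. apply is_derive_unique, hf_deriv.
    - apply filter_forall. intros y. apply (ex_RInt_continuous (V:=R_CompleteNormedModule)). intros; apply hf_cont. }
  replace (- (ge x * E x)) with (RInt (fun t => Derive (fun u => hf u t) x) 0 1); auto.
  rewrite (RInt_ext _ (fun t => scal (- ge x) (scal x (ge (x * t + 0))))).
  2:{ intros t _. cbv beta. transitivity (- (x * exp (- (x ^ 2 * (1 + t ^ 2)) / 2))). { apply is_derive_unique, hf_deriv. }
      replace (exp (- (x ^ 2 * (1 + t ^ 2)) / 2)) with (ge x * ge (x * t + 0)).
      2:{ unfold ge. rewrite <- exp_plus. f_equal. field. }
      unfold scal; simpl; unfold mult; simpl. ring. }
  rewrite (RInt_scal (V:=R_CompleteNormedModule)).
  2:{ apply (ex_RInt_continuous (V:=R_CompleteNormedModule)). intros. apply (ex_derive_continuous (K:=R_AbsRing) (V:=R_NormedModule)). unfold ge, scal; simpl; unfold mult; simpl. auto_derive. auto. }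
  rewrite (RInt_comp_lin (V:=R_CompleteNormedModule)). 2: apply ge_ex.
  unfold E, scal; simpl; unfold mult; simpl.
  replace (x * 0 + 0) with 0 by ring. replace (x * 1 + 0) with x by ring. ring.
Qed.

Definition Psi (x : R) : R := E x * E x + 2 * H x.

Lemma Psi_deriv (x : R) : is_derive Psi x 0.
Proof.
  unfold Psi.
  assert (A := is_derive_mult E E x _ _ (E_deriv x) (E_deriv x) ltac:(intros; apply Rmult_comm)).
  assert (B := is_derive_scal H x 2 _ (H_deriv x)).
  assert (C := is_derive_plus _ _ x _ _ A B).
  replace (0:R) with (plus (plus (mult (ge x) (E x)) (mult (E x) (ge x))) (2 * - (ge x * E x))).
  exact C.
  unfold plus, mult; simpl. ring.
Qed.

Lemma Psi_const (x : R) : Psi x = Psi 0.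
Proof.
  destruct (Rtotal_order x 0) as [h|[h|h]].
  - apply eq_is_derive; auto. intros; apply Psi_deriv.
  - subst; reflexivity.
  - symmetry; apply eq_is_derive; auto. intros; apply Psi_deriv.
Qed.

Lemma Psi0 : Psi 0 = PI / 2.
Proof.
  unfold Psi, E, H. rewrite RInt_point.
  assert (I : is_RInt (fun t => / (1 + t ^ 2)) 0 1 (minus (atan 1) (atan 0))).
  { apply (is_RInt_derive (V:=R_CompleteNormedModule)).
    - intros t _. apply is_derive_Reals. apply derivable_pt_lim_atan.
    - intros t _. apply (ex_derive_continuous (K:=R_AbsRing) (V:=R_NormedModule)). auto_derive. nra. }
  rewrite (RInt_ext _ (fun t => / (1 + t ^ 2))).
  2:{ intros t _. unfold hf. replace (- (0 ^ 2 * (1 + t ^ 2)) / 2) with 0 by (simpl; field).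
      rewrite exp_0. unfold Rdiv. apply Rmult_1_l. }
  rewrite (is_RInt_unique _ _ _ _ I). rewrite atan_1, atan_0. unfold minus, plus, opp, zero; simpl.
  assert (K : (0 * 0 + 2 * (PI / 4 + - 0) = PI / 2)%R) by field. exact K.
Qed.

Lemma H_ge0 (x : R) : 0 <= H x.
Proof.
  unfold H. apply RInt_ge_0. lra.
  apply (ex_RInt_continuous (V:=R_CompleteNormedModule)). intros; apply hf_cont.
  intros t _. unfold hf. apply Rle_mult_inv_pos. left; apply exp_pos. nra.
Qed.

Lemma E_sq (x : R) : E x * E x <= PI / 2.
Proof. rewrite <- Psi0, <- (Psi_const x). unfold Psi. pose proof (H_ge0 x). lra. Qed.

Lemma ge_int_le a b : RInt ge a b <= sqrt (2 * PI).
Proof.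
  assert (Ch : RInt ge a b = E b - E a).
  { unfold E. rewrite <- (RInt_Chasles (V:=R_CompleteNormedModule) ge 0 a b) by apply ge_ex.
    unfold plus; simpl. assert (K : forall p q : R, (p + q - p = q)%R) by (intros; ring). symmetry. apply K. }
  rewrite Ch. pose proof (E_sq a). pose proof (E_sq b).
  pose proof (sqrt_pos (2 * PI)). pose proof (sqrt_sqrt (2 * PI) ltac:(pose proof PI_RGT_0; lra)).
  set (s := sqrt (2 * PI)) in *. set (u := E a) in *. set (v := E b) in *.
  destruct (Rle_or_lt (v - u) s) as [h|h]; auto. exfalso.
  assert (0 <= (u + v) * (u + v)) by apply Rle_0_sqr.
  assert ((v - u) * (v - u) > s * s) by nra. nra.
Qed.

Lemma pdf_eq t : std_normal_pdf t = scal (/ sqrt (2 * PI)) (ge t).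
Proof. unfold std_normal_pdf, ge, scal; simpl; unfold mult; simpl. unfold Rdiv. apply Rmult_comm. Qed.

Lemma sq_pos : 0 < sqrt (2 * PI).
Proof. apply sqrt_lt_R0. pose proof PI_RGT_0; lra. Qed.

Lemma pdf_cont x : continuous std_normal_pdf x.
Proof. apply (ex_derive_continuous (K:=R_AbsRing) (V:=R_NormedModule)). unfold std_normal_pdf. auto_derive. auto. Qed.

Lemma pdf_ex a b : ex_RInt std_normal_pdf a b.
Proof. apply (ex_RInt_continuous (V:=R_CompleteNormedModule)). intros; apply pdf_cont. Qed.

Lemma pdf_pos t : 0 < std_normal_pdf t.
Proof. unfold std_normal_pdf. apply Rdiv_lt_0_compat. apply exp_pos. apply sq_pos. Qed.

Lemma pdf_int_le1 a b : RInt std_normal_pdf a b <= 1.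
Proof.
  rewrite (RInt_ext _ (fun t => scal (/ sqrt (2 * PI)) (ge t))) by (intros; apply pdf_eq).
  rewrite (RInt_scal (V:=R_CompleteNormedModule)) by apply ge_ex.
  unfold scal; simpl; unfold mult; simpl.
  pose proof (ge_int_le a b). pose proof sq_pos.
  assert (K : (/ sqrt (2 * PI) * RInt ge a b <= / sqrt (2 * PI) * sqrt (2 * PI))%R).
  { apply Rmult_le_compat_l; auto. left; apply Rinv_0_lt_compat; auto. }
  rewrite Rinv_l in K by lra. exact K.
Qed.

Definition Gc (x : R) : R := RInt std_normal_pdf 0 x.

Lemma Gc_diff a b : Gc b - Gc a = RInt std_normal_pdf a b.
Proof.
  unfold Gc. rewrite <- (RInt_Chasles (V:=R_CompleteNormedModule) std_normal_pdf 0 a b) by apply pdf_ex.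
  unfold plus; simpl. assert (K : forall p q : R, (p + q - p = q)%R) by (intros; ring). apply K.
Qed.

Lemma Gc_mono a b : a <= b -> Gc a <= Gc b.
Proof.
  intros h. assert (0 <= RInt std_normal_pdf a b).
  { apply RInt_ge_0; auto. apply pdf_ex. intros; left; apply pdf_pos. }
  pose proof (Gc_diff a b). lra.
Qed.

Lemma Gc_le1 a b : Gc b - Gc a <= 1.
Proof. rewrite Gc_diff. apply pdf_int_le1. Qed.

Definition Sset (y : R) : Prop := exists A, y = - Gc A.

Lemma Sset_bound : bound Sset.
Proof. exists (1 - Gc 0). intros y [A ->]. pose proof (Gc_le1 A 0). lra. Qed.

Lemma Sset_ne : exists y, Sset y.
Proof. exists (- Gc 0). exists 0. reflexivity. Qed.

Definition Mlub : R := proj1_sig (completeness Sset Sset_bound Sset_ne).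

Lemma Mlub_lub : is_lub Sset Mlub.
Proof. unfold Mlub. destruct (completeness Sset Sset_bound Sset_ne); auto. Qed.

Lemma Mlub_le y : Mlub <= 1 - Gc y.
Proof.
  destruct Mlub_lub as [_ h]. apply h. intros z [A ->]. pose proof (Gc_le1 A y). lra.
Qed.

Lemma Gc_lim : filterlim Gc (Rbar_locally m_infty) (locally (- Mlub)).
Proof.
  apply filterlim_locally. intros eps.
  destruct Mlub_lub as [ub lub].
  assert (exists A0, Mlub - eps < - Gc A0) as [A0 HA0].
  { apply Classical_Prop.NNPP. intros hn.
    assert (Mlub <= Mlub - eps).
    { apply lub. intros z [A ->]. destruct (Rle_or_lt (- Gc A) (Mlub - eps)); auto.
      exfalso; apply hn; exists A; auto. }
    destruct eps; simpl in *; lra. }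
  exists A0. intros x hx.
  assert (- Gc x <= Mlub) by (apply ub; exists x; auto).
  pose proof (Gc_mono x A0 ltac:(lra)).
  change (Rabs (Gc x - - Mlub) < eps). apply Rabs_def1; lra.
Qed.

Lemma Gc_deriv x : is_derive Gc x (std_normal_pdf x).
Proof.
  apply is_derive_RInt with 0.
  - apply filter_forall. intros b. unfold Gc. apply (RInt_correct (V:=R_CompleteNormedModule)), pdf_ex.
  - apply pdf_cont.
Qed.

Lemma Phi_eq x : Phi x = Gc x - - Mlub.
Proof.
  unfold Phi. apply is_RInt_gen_unique.
  assert (D : is_RInt_gen (Derive Gc) (Rbar_locally m_infty) (at_point x) (Gc x - - Mlub)).
  { apply is_RInt_gen_Derive.
    - apply filter_forall. intros ab t _. eexists; apply Gc_deriv.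
    - apply filter_forall. intros ab t _.
      eapply continuous_ext with (f := std_normal_pdf).
      + intros; symmetry; apply is_derive_unique, Gc_deriv.
      + apply pdf_cont.
    - apply Gc_lim.
    - intros P HP. unfold filtermap, at_point. exact (locally_singleton _ _ HP). }
  eapply is_RInt_gen_ext; [|exact D].
  apply filter_forall. intros ab t _. apply is_derive_unique, Gc_deriv.
Qed.

Lemma Phi_diff a b : Phi b - Phi a = RInt std_normal_pdf a b.
Proof. rewrite !Phi_eq, <- Gc_diff. ring. Qed.

Lemma Phi_lt1 y : Phi y < 1.
Proof.
  rewrite Phi_eq. pose proof (Mlub_le (y + 1)).
  assert (0 < RInt std_normal_pdf y (y + 1)).
  { apply RInt_gt_0. lra. intros; apply pdf_pos. intros; apply pdf_cont. }
  pose proof (Gc_diff y (y + 1)). lra.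
Qed.

Lemma pdf_le t : std_normal_pdf t <= / sqrt (2 * PI).
Proof.
  unfold std_normal_pdf, Rdiv. rewrite <- (Rmult_1_l (/ sqrt (2 * PI))) at 2.
  apply Rmult_le_compat_r. left; apply Rinv_0_lt_compat, sq_pos.
  rewrite <- exp_0. destruct (Req_dec (- t ^ 2 * / 2) 0) as [e|e]; [rewrite e; lra|]. left. apply exp_increasing. pose proof (pow2_ge_0 t). lra.
Qed.

Lemma pdf_int_small a b : a <= b -> RInt std_normal_pdf a b <= (b - a) * / sqrt (2 * PI).
Proof.
  intros h. eapply Rle_trans; [apply Rle_abs|].
  apply abs_RInt_le_const; auto. apply pdf_ex.
  intros t _. rewrite Rabs_pos_eq by (left; apply pdf_pos). apply pdf_le.
Qed.

Theorem mainTheorem2 (c vartheta alpha : R) :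
  0 < alpha < 1/2 ->
  exists delta : R, 0 < delta /\
    forall xobs : R, c < xobs < c + delta ->
      forall tlo thi : R,
        is_theta (1 - alpha / 2) xobs c tlo ->
        is_theta (alpha / 2) xobs c thi ->
        ~ (tlo <= vartheta <= thi).
Proof.
  intros ha.
  set (K := 1 - Phi (c - vartheta)).
  assert (HK : 0 < K) by (pose proof (Phi_lt1 (c - vartheta)); unfold K; lra).
  set (s := sqrt (2 * PI)). assert (Hs : 0 < s) by apply sq_pos.
  exists (alpha * K * s / 2). split.
  { apply Rdiv_lt_0_compat; [|lra]. apply Rmult_lt_0_compat; [apply Rmult_lt_0_compat|]; lra. }
  intros xobs [h1 h2] tlo thi _ Hhi [h3 h4].
  unfold is_theta, F in Hhi.
  assert (HD : K <= 1 - Phi (c - thi)).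
  { unfold K. pose proof (Phi_diff (c - thi) (c - vartheta)).
    assert (0 <= RInt std_normal_pdf (c - thi) (c - vartheta)).
    { apply RInt_ge_0. lra. apply pdf_ex. intros; left; apply pdf_pos. }
    lra. }
  assert (HN : Phi (xobs - thi) - Phi (c - thi) <= (xobs - c) * / s).
  { rewrite Phi_diff. replace (xobs - c) with ((xobs - thi) - (c - thi)) by ring.
    apply pdf_int_small. lra. }
  set (D := 1 - Phi (c - thi)) in *. set (N := Phi (xobs - thi) - Phi (c - thi)) in *.
  assert (HN2 : N = alpha / 2 * D).
  { rewrite <- Hhi. field. lra. }
  assert (HN3 : (xobs - c) * / s < alpha * K / 2).
  { apply Rmult_lt_reg_r with s; auto. rewrite Rmult_assoc, Rinv_l by lra. nra. }
  nra.
Qed.
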